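(* Let $s,t\ge0$ be integers, let $S$ be any $s\times s$ integer matrix and $T$ any $t\times t$ integer matrix, and let $m,n,m',n'$ be positive integers with $m+n=m'+n'$. Then $H_{m,n}(z)-H_{m',n'}(z)$ is independent of $z$, i.e. it takes the same value for all integers $z$.
   Context: $h_k$ denotes the complete homogeneous symmetric function of degree $k$, with $h_0=1$ and $h_k=0$ for $k<0$. For integer matrices $S=(S_{ij})_{1\le i,j\le s}$, $T=(T_{ij})_{1\le i,j\le t}$, positive integers $m,n$ and any integer $z$, $H_{m,n}(z)$ is the determinant of the $(s+t+2)\times(s+t+2)$ matrix whose entries are as follows (rows and columns indexed $1,\dots,s+t+2$): - for $1\le i,j\le s$: $h_{S_{ij}}$; - row $s+1$, columns $1,\dots,s$: all $0$ except column $s$, which is $1$; rows $s+2,\dots,s+t+2$, columns $1,\dots,s$: $0$; - column $s+1$: $h_{S_{i,s}+m}$ in row $i\le s$, $h_m$ in row $s+1$, $h_z$ in row $s+2$, and $0$ in rows $>s+2$; - column $s+2$: $h_{S_{i,s}+m+n-z}$ in row $i\le s$, $h_{m+n-z}$ in row $s+1$, $h_n$ in row $s+2$, $1$ in row $s+3$ (if $t>0$), $0$ in rows $>s+3$; - column $s+2+j$ for $1\le j\le t$: $h_{S_{i,s}+m+n-z+T_{1j}}$ in row $i\le s$, $h_{m+n-z+T_{1j}}$ in row $s+1$, $h_{n+T_{1j}}$ in row $s+2$, and $h_{T_{ij}}$ in row $s+2+i$ for $1\le i\le t$. *)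

(* Defs.v *)
From HB Require Import structures.
From mathcomp Require Import all_boot all_order all_algebra.
Set Implicit Arguments. Unset Strict Implicit. Unset Printing Implicit Defensive.
Import Order.TTheory GRing.Theory Num.Theory.
Local Open Scope ring_scope.

(* Entry (i,j) of an integer matrix, accessed with 1-based nat indices;
   0 outside the range (never used out of range below). *)
Definition mget (k : nat) (M : 'M[int]_k) (i j : nat) : int :=
  match @insub nat (fun x => x < k)%N 'I_k i.-1,
        @insub nat (fun x => x < k)%N 'I_k j.-1 with
  | Some i', Some j' => M i' j'
  | _, _ => 0
  end.

(* The entries of the matrix defining H_{m,n}(z), with 1-based indices
   i, j in 1..s+t+2.  [h] plays the role of the complete homogeneous
   symmetric functions h_k (k : int). *)
Definition Hentry (R : comRingType) (h : int -> R) (s t : nat)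
  (S : 'M[int]_s) (T : 'M[int]_t) (m n : nat) (z : int) (i j : nat) : R :=
  let Sis := mget S i s in
  let mz := (m%:Z + n%:Z - z)%R in
  if (j <= s)%N then
    (if (i <= s)%N then h (mget S i j)
     else if i == s.+1 then (if j == s then 1 else 0) else 0)
  else if j == s.+1 then
    (if (i <= s)%N then h (Sis + m%:Z)
     else if i == s.+1 then h m%:Z
     else if i == s.+2 then h z else 0)
  else if j == s.+2 then
    (if (i <= s)%N then h (Sis + mz)
     else if i == s.+1 then h mz
     else if i == s.+2 then h n%:Z
     else if i == s.+3 then 1 else 0)
  else (* j = s+2+j' with 1 <= j' <= t *)
    let j' := (j - s.+2)%N in
    let T1j := mget T 1 j' in
    (if (i <= s)%N then h (Sis + mz + T1j)
     else if i == s.+1 then h (mz + T1j)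
     else if i == s.+2 then h (n%:Z + T1j)
     else h (mget T (i - s.+2)%N j')).

Definition Hdet (R : comRingType) (h : int -> R) (s t : nat)
  (S : 'M[int]_s) (T : 'M[int]_t) (m n : nat) (z : int) : R :=
  \det (\matrix_(i < s + t + 2, j < s + t + 2)
          Hentry h S T m n z i.+1 j.+1).

(* Main.v *)
Require Import Defs.
From HB Require Import structures.
From mathcomp Require Import all_boot all_order all_algebra all_fingroup.
Import GRing.Theory.
Local Open Scope ring_scope.

Section H.
Variables (R : comRingType) (h : int -> R) (s t : nat)
  (S : 'M[int]_s) (T : 'M[int]_t).

Lemma Hentry_mn m n m' n' z i j : (m + n = m' + n')%N ->
  (i == s.+2) = (j == s.+1) ->
  Hentry h S T m n z i j = Hentry h S T m' n' z i j.
Proof.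
move=> E hij.
have E' : (m%:Z + n%:Z = m'%:Z + n'%:Z)%R by rewrite -!PoszD E.
rewrite /Hentry E'.
case Hi: (i == s.+2) hij => hij.
  rewrite (eqP Hi) -hij /=.
  have -> : (s.+2 <= s)%N = false by rewrite ltnNge ltnW.
  by rewrite (gtn_eqF (ltnSn s.+1)).
by rewrite -hij.
Qed.

Lemma Hentry_z m n z1 z2 i j :
  ((i <= s.+1)%N -> (j <= s.+1)%N) -> ~~ ((i == s.+2) && (j == s.+1)) ->
  Hentry h S T m n z1 i j = Hentry h S T m n z2 i j.
Proof.
move=> hij hn; rewrite /Hentry.
case: (leqP j s) => hj //.
case: (eqVneq j s.+1) => [ej|hj1].
  move: hn; rewrite ej eqxx andbT => /negbTE ->; done.
have hj2 : (s.+1 < j)%N by rewrite ltn_neqAle eq_sym hj1 hj.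
have hi : (s.+1 < i)%N by rewrite ltnNge; apply/negP => /hij; rewrite leqNgt hj2.
have -> : (i <= s)%N = false by rewrite leqNgt ltnW.
by rewrite (gtn_eqF hi).
Qed.

Lemma Hentry_zero m n z i j : (s.+2 <= i)%N -> (j <= s.+1)%N ->
  ~~ ((i == s.+2) && (j == s.+1)) -> Hentry h S T m n z i j = 0.
Proof.
move=> hi hj hn; rewrite /Hentry.
have -> : (i <= s)%N = false by rewrite leqNgt ltnW.
have -> : (i == s.+1) = false by rewrite gtn_eqF.
case: (leqP j s) => hj' //.
have ej : j = s.+1 by apply/eqP; rewrite eqn_leq hj hj'.
by move: hn; rewrite ej eqxx andbT => /negbTE ->.
Qed.

Lemma caseB (sg : {perm 'I_(s + t + 2)}) m n z1 z2 (r0 : 'I_(s + t + 2))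
  (hr0 : val r0 = s.+1) (hs : (val (sg r0) != s)) :
  \prod_i Hentry h S T m n z1 (val i).+1 (val (sg i)).+1 =
  \prod_i Hentry h S T m n z2 (val i).+1 (val (sg i)).+1.
Proof.
have hnot : forall i : 'I_(s + t + 2),
    ~~ (((val i).+1 == s.+2) && ((val (sg i)).+1 == s.+1)).
  move=> i; apply/negP => /andP[/eqP[ei] /eqP[ej]].
  have ir : i = r0 by apply: val_inj; rewrite /= ei hr0.
  by move: hs; rewrite -ir /= ej eqxx.
case: (boolP [exists i, (s < val i)%N && (val (sg i) <= s)%N]).
  move/existsP => [i /andP[hi hsi]].
  rewrite (bigD1 i) //= [X in _ = X](bigD1 i) //=.
  by rewrite !(@Hentry_zero m n) ?mul0r ?hnot.
move/existsPn => hall.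
pose B := [set i : 'I_(s + t + 2) | (s < val i)%N].
have sub : sg @: B \subset B.
  apply/subsetP => _ /imsetP[k kB ->]; rewrite inE.
  move: (hall k); rewrite inE in kB; rewrite kB /= ltnNge; exact.
have eqB : sg @: B = B.
  by apply/eqP; rewrite eqEcard sub card_imset //=; apply: perm_inj.
have hsm : forall i : 'I_(s + t + 2), (val i <= s)%N -> (val (sg i) <= s)%N.
  move=> i hi; rewrite leqNgt; apply/negP => hsi.
  have : sg i \in sg @: B by rewrite eqB inE.
  case/imsetP => k kB /perm_inj ki.
  by move: kB; rewrite inE -ki ltnNge hi.
apply: eq_bigr => i _; apply: Hentry_z => //.
by rewrite !ltnS; apply: hsm.
Qed.

Lemma caseA (sg : {perm 'I_(s + t + 2)}) m n m' n' z (r0 : 'I_(s + t + 2))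
  (hmn : (m + n = m' + n')%N)
  (hr0 : val r0 = s.+1) (hs : (val (sg r0) == s)) :
  \prod_i Hentry h S T m n z (val i).+1 (val (sg i)).+1 =
  \prod_i Hentry h S T m' n' z (val i).+1 (val (sg i)).+1.
Proof.
apply: eq_bigr => i _; apply: Hentry_mn => //.
case: (eqVneq i r0) => [->|ne].
  by rewrite hr0 eqxx (eqP hs) eqxx.
have -> : ((val i).+1 == s.+2) = false.
  by apply/negbTE; apply: contra ne => /eqP[ei]; apply/eqP/val_inj; rewrite /= ei hr0.
apply/esym/negbTE; apply/negP => /eqP[ej].
have : sg i = sg r0 by apply: val_inj; rewrite /= ej (eqP hs).
by move/perm_inj/eqP; rewrite (negbTE ne).
Qed.
End H.

Theorem lemma2p4 (R : comRingType) (h : int -> R)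
  (h0 : h 0 = 1) (hneg : forall k : int, k < 0 -> h k = 0)
  (s t : nat) (S : 'M[int]_s) (T : 'M[int]_t) (m n m' n' : nat)
  (hm : (0 < m)%N) (hn : (0 < n)%N) (hm' : (0 < m')%N) (hn' : (0 < n')%N)
  (hmn : (m + n = m' + n')%N) (z1 z2 : int) :
  Hdet h S T m n z1 - Hdet h S T m' n' z1
  = Hdet h S T m n z2 - Hdet h S T m' n' z2.
Proof.
have lt : (s.+1 < s + t + 2)%N by rewrite addn2 !ltnS leq_addr.
pose r0 : 'I_(s + t + 2) := Ordinal lt.
rewrite /Hdet /determinant -!sumrB; apply: eq_bigr => sg _.
rewrite -!mulrBr; congr (_ * _).
under eq_bigr do rewrite mxE.
under [X in _ - X = _]eq_bigr do rewrite mxE.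
under [X in _ = X - _]eq_bigr do rewrite mxE.
under [X in _ = _ - X]eq_bigr do rewrite mxE.
case: (boolP (val (sg r0) == s)) => hs.
  by rewrite (@caseA _ h s t S T sg m n m' n' z1 r0 hmn (erefl _) hs) (@caseA _ h s t S T sg m n m' n' z2 r0 hmn (erefl _) hs) !subrr.
by rewrite (@caseB _ h s t S T sg m n z1 z2 r0 (erefl _) hs) (@caseB _ h s t S T sg m' n' z1 z2 r0 (erefl _) hs).
Qed.
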